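(* Let $\mathcal{A}$ be Suslin, $\Phi\colon\mathcal{A}\to\mathbb{R}$ measurable and semibounded, $\mathcal{Q}$ separable and metrizable, and $\Psi\colon\mathcal{A}\to\mathcal{Q}$ measurable. For measurable $g_1,\dots,g_n\colon\mathcal{Q}\to\mathbb{R}$ and closed (possibly semi-infinite or degenerate) intervals $I_1,\dots,I_n$, let $\mathfrak{Q}:=\{\mathbb{Q}\in\mathcal{M}(\mathcal{Q}):\mathbb{E}_{\mathbb{Q}}[g_i]\in I_i,\ i=1,\dots,n\}$, $\Pi(I):=\{\pi\in\mathcal{M}(\mathcal{A}):\Psi\pi\in\mathfrak{Q}\}$, and $\Pi(I,n):=\Pi(I)\cap\Delta(n)$. Then $\mathcal{U}(\Pi(I))=\mathcal{U}(\Pi(I,n))$, where \[\mathcal{U}(\Pi(I,n))=\sup\Big\{\sum_{i=0}^n\alpha_i\Phi(\mu_i)\ :\ \mu_i\in\mathcal{A},\ \alpha_i\ge0,\ \sum_{i=0}^n\alpha_i=1,\ \sum_{i=0}^n\alpha_ig_j(\Psi(\mu_i))\in I_j\text{ for }j=1,\dots,n\Big\}.\]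
   Context: $\mathcal{M}(\mathcal{Y})$: Borel probability measures; $\Psi\pi$ is the pushforward of $\pi$. Implicit in the definition of $\mathfrak{Q}$ is that all $n$ integrals exist. $\Delta(n):=\{\sum_{i=0}^n\alpha_i\delta_{\mu_i}:\mu_i\in\mathcal{A},\alpha_i\ge0\}$. For $\Pi\subseteq\mathcal{M}(\mathcal{A})$, $\mathcal{U}(\Pi):=\sup_{\pi\in\Pi}\mathbb{E}_\pi[\Phi]$, with $\sup\varnothing=-\infty$. *)

(* Defs.v *)
From HB Require Import structures.
From mathcomp Require Import all_boot all_order all_algebra.
From mathcomp Require Import all_classical all_reals all_analysis.

Set Implicit Arguments.
Unset Strict Implicit.
Unset Printing Implicit Defensive.

Import Order.TTheory GRing.Theory Num.Theory.
Local Open Scope classical_set_scope.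
Local Open Scope ring_scope.

Definition is_metric (R : realType) (T : Type) (d : T -> T -> R) : Prop :=
  [/\ forall x y, d x y = 0 <-> x = y,
      forall x y, d x y = d y x &
      forall x y z, d x z <= d x y + d y z].

Definition metric_induces (R : realType) (T : topologicalType) (d : T -> T -> R)
  : Prop :=
  forall U : set T, open U <->
    (forall x, U x -> exists2 e : R, 0 < e & [set y | d x y < e] `<=` U).

Definition metric_complete (R : realType) (T : Type) (d : T -> T -> R) : Prop :=
  forall u : nat -> T,
    (forall e : R, 0 < e -> exists N, forall m n, (N <= m)%N -> (N <= n)%N ->
        d (u m) (u n) < e) ->
    exists l, forall e : R, 0 < e -> exists N, forall n, (N <= n)%N -> d (u n) l < e.

Definition separable_space (T : topologicalType) : Prop :=
  exists D : set T, countable D /\ closure D = setT.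

Definition metrizable_space (R : realType) (T : topologicalType) : Prop :=
  exists d : T -> T -> R, is_metric d /\ metric_induces d.

Definition polish_space (R : realType) (T : topologicalType) : Prop :=
  separable_space T /\
  exists d : T -> T -> R, [/\ is_metric d, metric_induces d & metric_complete d].

Definition suslin_space (R : realType) (T : topologicalType) : Prop :=
  hausdorff_space T /\
  exists (P : topologicalType) (f : P -> T),
    [/\ polish_space R P, continuous f & forall y : T, exists x : P, f x = y].

Definition borel (T : ptopologicalType) := g_sigma_algebraType (@open T).

Local Open Scope ereal_scope.

Definition in_cinterval (R : realType) (lo up : \bar R) (x : R) : Prop :=
  lo <= x%:E <= up.

Definition frakQ (R : realType) (Q : ptopologicalType) (n : nat)
  (g : 'I_n -> Q -> R) (lo up : 'I_n -> \bar R)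
  : set (probability (borel Q) R) :=
  [set P | forall j : 'I_n,
     P.-integrable [set: borel Q] (fun y => (g j y)%:E) /\
     lo j <= \int[P]_y (g j y)%:E <= up j].

Definition PiI (R : realType) (A Q : ptopologicalType) (Psi : A -> Q) (n : nat)
  (g : 'I_n -> Q -> R) (lo up : 'I_n -> \bar R)
  : set (probability (borel A) R) :=
  [set pi | exists2 P : probability (borel Q) R,
     (forall B : set (borel Q), measurable B ->
        P B = pushforward pi (Psi : borel A -> borel Q) B)
     & frakQ g lo up P].

Definition Delta (R : realType) (A : ptopologicalType) (n : nat)
  : set (probability (borel A) R) :=
  [set pi | exists (mu : 'I_n.+1 -> A) (alpha : 'I_n.+1 -> R),
     (forall i, (0 <= alpha i)%R) /\
     forall B : set (borel A), measurable B ->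
       pi B = \sum_(i < n.+1) (alpha i)%:E * \d_(mu i : borel A) B].

(* U(Pi) = sup_{pi in Pi} E_pi[Phi]  (sup of the empty set is -oo) *)
Definition Uval (R : realType) (A : ptopologicalType) (Phi : A -> R)
  (Pi : set (probability (borel A) R)) : \bar R :=
  ereal_sup [set \int[pi]_x (Phi x)%:E | pi in Pi].

Definition semibounded (R : realType) (T : Type) (f : T -> R) : Prop :=
  (exists M : R, forall x, (f x <= M)%R) \/ (exists M : R, forall x, (M <= f x)%R).

(* Main.v *)
Require Import Defs.
From HB Require Import structures.
From mathcomp Require Import all_boot all_order all_algebra.
From mathcomp Require Import all_classical all_reals all_analysis.
From mathcomp Require Import ring lra measurable_realfun.

Set Implicit Arguments.
Unset Strict Implicit.
Unset Printing Implicit Defensive.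
Import Order.TTheory GRing.Theory Num.Theory.
Local Open Scope classical_set_scope.
Local Open Scope ring_scope.


Section Sep.
Variable R : realType.

Definition dotv (d : nat) (a y : 'I_d -> R) : R := \sum_(i < d) a i * y i.
Definition extv d (y : 'I_d -> R) (s : R) : 'I_d.+1 -> R :=
  fun i => if unlift ord_max i is Some j then y j else s.
Definition restv d (y : 'I_d.+1 -> R) : 'I_d -> R := fun j => y (lift ord_max j).

Lemma extv_max d (y : 'I_d -> R) s : extv y s ord_max = s.
Proof. by rewrite /extv unlift_none. Qed.

Lemma extv_lift d (y : 'I_d -> R) s j : extv y s (lift ord_max j) = y j.
Proof. by rewrite /extv liftK. Qed.

Lemma restv_ext d (y : 'I_d -> R) s : restv (extv y s) = y.
Proof. by apply/funext => j; rewrite /restv extv_lift. Qed.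

Lemma extv_rest d (y : 'I_d.+1 -> R) : extv (restv y) (y ord_max) = y.
Proof.
apply/funext => i; rewrite /extv /restv.
by case: unliftP => [j ->|->].
Qed.

Lemma dotv_ext d (a y : 'I_d -> R) t s :
  dotv (extv a t) (extv y s) = dotv a y + t * s.
Proof.
rewrite /dotv big_ord_recr /= !extv_max; congr (_ + _).
apply: eq_bigr => i _.
have -> : widen_ord (leqnSn d) i = lift ord_max i by apply/val_inj; exact: (esym (lift_max i)).
by rewrite !extv_lift.
Qed.

Lemma dotv_rest d (a y : 'I_d.+1 -> R) :
  dotv a y = dotv (restv a) (restv y) + a ord_max * y ord_max.
Proof. by rewrite -{1}(extv_rest a) -{1}(extv_rest y) dotv_ext. Qed.

Lemma sep d (K : set ('I_d -> R)) :
 (forall y z, K y -> K z -> K (fun i => y i + z i)) ->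
 (forall t y, 0 < t -> K y -> K (fun i => t * y i)) ->
 ~ K (fun=> 0) ->
 (forall y, ~ K y) \/
 exists2 a : 'I_d -> R, (exists i, a i != 0) & forall y, K y -> 0 <= dotv a y.
Proof.
elim: d K => [|d IH] K Kadd Kscal K0.
  left => y Ky; apply: K0.
  by have <- : y = (fun=> 0) by apply/funext => -[].
right.
have [[yn Kyn yn0]|nn] := pselect (exists2 y, K y & y ord_max < 0); last first.
  exists (extv (fun=> 0) 1); first by exists ord_max; rewrite extv_max oner_neq0.
  move=> y Ky; rewrite -(extv_rest y) dotv_ext /dotv big1 ?mul1r ?add0r.
    by rewrite leNgt; apply/negP => yneg; apply: nn; exists y.
  by move=> i _; rewrite mul0r.
have [[yp Kyp yp0]|np] := pselect (exists2 y, K y & 0 < y ord_max); last first.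
  exists (extv (fun=> 0) (-1)); first by exists ord_max; rewrite extv_max oppr_eq0 oner_neq0.
  move=> y Ky; rewrite -(extv_rest y) dotv_ext /dotv big1 ?add0r.
    rewrite mulN1r oppr_ge0 leNgt; apply/negP => ypos; apply: np; exists y => //.
  by move=> i _; rewrite mul0r.
pose K1 := [set y' : 'I_d -> R | K (extv y' 0)].
have K1add : forall y z, K1 y -> K1 z -> K1 (fun i => y i + z i).
  move=> y z Ky Kz; rewrite /K1 /=.
  have -> : extv (fun i => y i + z i) 0 = (fun i => extv y 0 i + extv z 0 i).
    by apply/funext => i; rewrite /extv; case: unlift => // ; rewrite addr0.

  exact: Kadd.
have K1scal : forall t y, 0 < t -> K1 y -> K1 (fun i => t * y i).
  move=> t y t0 Ky; rewrite /K1 /=.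
  have -> : extv (fun i => t * y i) 0 = (fun i => t * extv y 0 i).
    by apply/funext => i; rewrite /extv; case: unlift => // ; rewrite mulr0.
  exact: Kscal.
have K10 : ~ K1 (fun=> 0).
  rewrite /K1 /=.
  have -> : extv (fun=> 0) 0 = (fun=> 0) :> ('I_d.+1 -> R) by apply/funext => i; rewrite /extv; case: unlift.
  exact: K0.
have comb : forall y z, K y -> K z -> 0 < y ord_max -> z ord_max < 0 ->
    K1 (restv (fun i => - z ord_max * y i + y ord_max * z i)).
  move=> y z Ky Kz y0 z0; rewrite /K1 /=.
  set w := (fun i => _).
  have -> : extv (restv w) 0 = w.
    rewrite -{2}(extv_rest w); congr extv.
    by rewrite /w; ring.
  apply: Kadd; apply: Kscal => //; by rewrite oppr_gt0.
have [K1e|[a' [i0 a'i0] a'K1]] := IH K1 K1add K1scal K10.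
  by exfalso; apply: (K1e _ (comb _ _ Kyp Kyn yp0 yn0)).
pose S1 := [set - dotv a' (restv y) / y ord_max | y in [set y | K y /\ 0 < y ord_max]].
have key : forall y z, K y -> K z -> 0 < y ord_max -> z ord_max < 0 ->
    - dotv a' (restv y) / y ord_max <= dotv a' (restv z) / (- z ord_max).
  move=> y z Ky Kz y0 z0.
  have := a'K1 _ (comb _ _ Ky Kz y0 z0).
  have -> : dotv a' (restv (fun i => - z ord_max * y i + y ord_max * z i)) =
    - z ord_max * dotv a' (restv y) + y ord_max * dotv a' (restv z).
    rewrite /dotv /restv mulr_sumr mulr_sumr -big_split /=.
    by apply: eq_bigr => i _; ring.
  move=> h.
  have zp : 0 < - z ord_max by rewrite oppr_gt0.
  rewrite ler_pdivrMr // mulrAC ler_pdivlMr //.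
  move: h; set A := dotv a' _; set B := dotv a' _; move=> h.
  nra.
have S1ne : S1 !=set0 by exists (- dotv a' (restv yp) / yp ord_max); exists yp.
have S1ub : ubound S1 (dotv a' (restv yn) / (- yn ord_max)).
  by move=> _ [y [Ky y0] <-]; apply: key.
have hS1 : has_sup S1 by split => //; exists (dotv a' (restv yn) / (- yn ord_max)).
exists (extv a' (sup S1)).
  by exists (lift ord_max i0); rewrite extv_lift.
move=> y Ky; rewrite -(extv_rest y) dotv_ext.
have [y0|y0|y0] := ltgtP (y ord_max) 0.
- have : sup S1 <= dotv a' (restv y) / (- y ord_max).
    apply: ge_sup => // _ [z [Kz z0] <-]; exact: key.
  have yp' : 0 < - y ord_max by rewrite oppr_gt0.
  rewrite ler_pdivlMr //; set A := dotv a' _; nra.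
- have : - dotv a' (restv y) / y ord_max <= sup S1.
    by apply: sup_upper_bound => //; exists y.
  rewrite ler_pdivrMr //; set A := dotv a' _; nra.
- rewrite y0 mulr0 addr0; apply: a'K1; rewrite /K1 /= -y0 extv_rest //.
Qed.

End Sep.


Section combo.
Context (R : realType) (X : Type).
Implicit Types (s : seq (R * X)) (D : set X).

Definition wsum s (f : X -> R) : R := \sum_(p <- s) p.1 * f p.2.

Fixpoint okc D s : Prop :=
  if s is p :: s' then 0 <= p.1 /\ D p.2 /\ okc D s' else True.

Definition combo D s := okc D s /\ wsum s (fun=> 1) = 1.

Definition scal t s := [seq (t * p.1, p.2) | p <- s].

Lemma okc_cat D s1 s2 : okc D s1 -> okc D s2 -> okc D (s1 ++ s2).
Proof. by elim: s1 => //= p s IH [? [? ?]] ?; split=> //; split=> //; exact: IH. Qed.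

Lemma okc_scal D t s : 0 <= t -> okc D s -> okc D (scal t s).
Proof.
elim: s => //= p s IH t0 [p0 [Dp os]]; split; first exact: mulr_ge0.
by split=> //; exact: IH.
Qed.

Lemma okc_sub D D' s : D `<=` D' -> okc D s -> okc D' s.
Proof. by move=> DD'; elim: s => //= p s IH [? [? ?]]; split=> //; split; [exact: DD'|exact: IH]. Qed.

Lemma wsum_cat s1 s2 f : wsum (s1 ++ s2) f = wsum s1 f + wsum s2 f.
Proof. exact: big_cat. Qed.

Lemma wsum_scal t s f : wsum (scal t s) f = t * wsum s f.
Proof. by rewrite /wsum big_map mulr_sumr; apply: eq_bigr => p _ /=; rewrite mulrA. Qed.

Lemma wsum1 a x f : wsum [:: (a, x)] f = a * f x.
Proof. by rewrite /wsum big_cons big_nil addr0. Qed.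

Lemma wsum_eqD D s f g : okc D s -> (forall x, D x -> f x = g x) -> wsum s f = wsum s g.
Proof.
move=> os fg; rewrite /wsum; elim: s os => [|p s IH] /=; first by rewrite !big_nil.
by move=> [_ [Dp os]]; rewrite !big_cons fg // IH.
Qed.

Lemma wsum_leD D s f g : okc D s -> (forall x, D x -> f x <= g x) -> wsum s f <= wsum s g.
Proof.
move=> os fg; rewrite /wsum; elim: s os => [|p s IH] /=; first by rewrite !big_nil.
move=> [p0 [Dp os]]; rewrite !big_cons; apply: lerD; last exact: IH.
by apply: ler_wpM2l => //; exact: fg.
Qed.

Lemma wsumD s f g : wsum s (fun x => f x + g x) = wsum s f + wsum s g.
Proof. by rewrite /wsum -big_split; apply: eq_bigr => p _; rewrite mulrDr. Qed.

Lemma wsumZ s c f : wsum s (fun x => c * f x) = c * wsum s f.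
Proof. by rewrite /wsum mulr_sumr; apply: eq_bigr => p _; rewrite mulrCA. Qed.

Lemma wsum0 s : wsum s (fun=> 0) = 0.
Proof. by rewrite /wsum big1 // => p _; rewrite mulr0. Qed.

Lemma wsum_lin k s (a : 'I_k -> R) (f : 'I_k -> X -> R) :
  wsum s (fun x => \sum_i a i * f i x) = \sum_i a i * wsum s (f i).
Proof.
rewrite /wsum; under eq_bigr do rewrite mulr_sumr.
rewrite exchange_big /=; apply: eq_bigr => i _; rewrite mulr_sumr.
by apply: eq_bigr => p _; rewrite mulrCA.
Qed.

End combo.

Section KL.
Context d (X : measurableType d) (R : realType) (mu : probability X R).
Local Open Scope ereal_scope.

Lemma le_integral_m (D : set X) (f g : X -> \bar R) : measurable D ->
  measurable_fun D f -> measurable_fun D g -> (forall x, D x -> f x <= g x) ->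
  \int[mu]_(x in D) f x <= \int[mu]_(x in D) g x.
Proof.
move=> mD mf mg fg; rewrite integralE [leRHS]integralE leeB//.
- apply: ge0_le_integral => //.
  + exact: measurable_funepos.
  + exact: measurable_funepos.
  + by move=> x Dx; apply: (funepos_le (D:=D)) => [y /set_mem|]; [exact: fg|exact: mem_set].
- apply: ge0_le_integral => //.
  + exact: measurable_funeneg.
  + exact: measurable_funeneg.
  + by move=> x Dx; apply: (funeneg_le (D:=D)) => [y /set_mem|]; [exact: fg|exact: mem_set].
Qed.

Lemma negl_integral (D N : set X) (f : X -> \bar R) : measurable N -> measurable D ->
  measurable_fun D f -> mu N = 0 ->
  \int[mu]_(x in D) f x = \int[mu]_(x in D `\` N) f x.
Proof.
move=> mN mD mf N0; rewrite integralE [RHS]integralE.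
rewrite (ge0_negligible_integral mN mD (measurable_funepos mf)) //.
by rewrite (ge0_negligible_integral mN mD (measurable_funeneg mf)).
Qed.


Local Close Scope ereal_scope.

Lemma KLstep k (D : set X) (u : 'I_k -> X -> R) (h : X -> R) (c : R) :
  measurable D -> mu D = 1%E ->
  (forall j, mu.-integrable D (EFin \o u j)) ->
  (forall j, (\int[mu]_(x in D) (u j x)%:E = 0)%E) ->
  measurable_fun D h -> (c%:E < \int[mu]_(x in D) (h x)%:E)%E ->
  (exists s, [/\ combo D s, forall j, wsum s (u j) = 0 & c <= wsum s h]) \/
  exists a : 'I_k -> R, exists M : set X,
    [/\ exists i, a i != 0, measurable M, mu M = 0%E &
        forall x, D x -> ~ M x -> \sum_i a i * u i x = 0].
Proof.
move=> mD muD iu u0 mh ch.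
have [x0 Dx0] : exists x, D x.
  apply/set0P/negP => /eqP D0; move: muD; rewrite D0 measure0 => /eqP.
  by rewrite eq_sym; apply/negP; rewrite onee_eq0.
have [good|bad] := pselect (exists s, [/\ combo D s, forall j, wsum s (u j) = 0 & c <= wsum s h]).
  by left.
right.
pose vec s t r := extv (fun j => t * wsum s (u j)) (t * (wsum s h - c - r)).
pose K := [set y | exists s t r, [/\ combo D s, 0 < t, 0 <= r & y = vec s t r]].
have Kadd : forall y z, K y -> K z -> K (fun i => y i + z i).
  move=> _ _ [s1 [t1 [r1 [cs1 t10 r10 ->]]]] [s2 [t2 [r2 [cs2 t20 r20 ->]]]].
  case: cs1 => o1 w1; case: cs2 => o2 w2.
  have T0 : 0 < t1 + t2 by rewrite addr_gt0.
  exists (scal (t1 / (t1 + t2)) s1 ++ scal (t2 / (t1 + t2)) s2), (t1 + t2),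
    ((t1 * r1 + t2 * r2) / (t1 + t2)).
  split => //.
  - split; first by apply: okc_cat; apply: okc_scal => //; apply: divr_ge0 => //; apply: ltW.
    rewrite wsum_cat !wsum_scal w1 w2 !mulr1 -mulrDl divff //; exact: lt0r_neq0.
  - by apply: divr_ge0; [apply: addr_ge0; apply: mulr_ge0 => //; apply: ltW|apply: ltW].
  - apply/funext => i; rewrite /vec /extv; case: unlift => [j|];
      rewrite !wsum_cat !wsum_scal; field; exact: lt0r_neq0.
have Kscal : forall t y, 0 < t -> K y -> K (fun i => t * y i).
  move=> t _ t0 [s [t' [r [cs t'0 r0 ->]]]]; exists s, (t * t'), r; split => //.
    exact: mulr_gt0.
  by apply/funext => i; rewrite /vec /extv; case: unlift => [j|]; rewrite mulrA.
have K0 : ~ K (fun=> 0).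
  move=> [s [t [r [cs t0 r0 e]]]]; apply: bad; exists s; split => //.
    move=> j; have := congr1 (fun y => y (lift ord_max j)) e.
    rewrite /vec extv_lift => /esym/eqP; rewrite mulf_eq0 (gt_eqF t0) /= => /eqP //.
  have := congr1 (fun y => y ord_max) e; rewrite /vec extv_max => /esym/eqP.
  by rewrite mulf_eq0 (gt_eqF t0) /= subr_eq0 => /eqP e2; rewrite -subr_ge0 e2.
have Kx : forall x r, D x -> 0 <= r -> K (vec [:: (1, x)] 1 r).
  move=> x r Dx r0; exists [:: (1, x)], 1, r; split => //.
  by split; [rewrite /= ler01; split | rewrite wsum1 mulr1].
have [Ke|[a [i ai] aK]] := sep Kadd Kscal K0.
  by exfalso; apply: (Ke _ (Kx x0 0 Dx0 (lexx _))).
pose a' := restv a; pose b := a ord_max.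
have hx : forall x r, D x -> 0 <= r ->
    0 <= \sum_j a' j * u j x + b * (h x - c - r).
  move=> x r Dx r0; have := aK _ (Kx x r Dx r0).
  rewrite dotv_rest /vec restv_ext extv_max wsum1 !mul1r /dotv.
  by under eq_bigr do rewrite wsum1 !mul1r.
have b_le0 : b <= 0.
  rewrite leNgt; apply/negP => b0.
  pose E := \sum_j a' j * u j x0 + b * (h x0 - c).
  have r0 : 0 <= `|E| / b + 1 by rewrite addr_ge0 // divr_ge0 // ltW.
  have H := hx x0 _ Dx0 r0.
  have e1 : \sum_j a' j * u j x0 + b * (h x0 - c - (`|E| / b + 1)) = E - `|E| - b.
    rewrite /E; field; exact: lt0r_neq0.
  have hE : E <= `|E| := ler_norm E.
  move: H; rewrite e1; lra.
have [bneg|bzero] : b < 0 \/ b = 0.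
  by move: b_le0; rewrite le_eqVlt => /orP[/eqP->|->]; [right|left].
  exfalso; move: ch; apply/negP; rewrite -leNgt.
  pose g x := c + \sum_j (a' j / - b) * u j x.
  have ig : mu.-integrable D (fun x => (\sum_j (a' j / - b) * u j x)%:E).
    under eq_fun do rewrite -sumEFin.
    apply: (integrable_sum mD) => j _; under eq_fun do rewrite EFinM.
    exact: (integrableZl mD _ (iu _)).
  have ic : mu.-integrable D (EFin \o cst c) by exact: finite_measure_integrable_cst.
  apply: (@le_trans _ _ (\int[mu]_(x in D) (g x)%:E)%E).
    apply: le_integral_m => //.
    - exact/measurable_EFinP.
    - by rewrite /g; under eq_fun do rewrite EFinD; exact: (measurable_int _ (integrableD mD ic ig)).
    - move=> x Dx; rewrite lee_fin /g.
      have := hx x 0 Dx (lexx _); rewrite subr0.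
      rewrite (_ : \sum_j (a' j / - b) * u j x = (\sum_j a' j * u j x) / - b).
        move=> H; set S := \sum_j a' j * u j x in H *.
        rewrite -subr_ge0 -(@pmulr_rge0 _ (- b)); last by rewrite oppr_gt0.
        have -> : - b * (c + S / - b - h x) = S + b * (h x - c).
          by field; rewrite ?oppr_eq0 lt_eqF.
        exact: H.
      by rewrite mulr_suml; apply: eq_bigr => j _; rewrite mulrAC.
  rewrite /g; under eq_integral do rewrite EFinD.
  rewrite (integralD mD ic ig).
  rewrite (_ : (\int[mu]_(x in D) (EFin \o cst c) x)%E = c%:E); last first.
    rewrite (_ : EFin \o cst c = cst c%:E) // integral_cst //.
    by rewrite -[RHS]mule1; congr (_ * _)%E; exact: muD.
  under eq_integral do rewrite -sumEFin.
  rewrite integral_sum //; last first.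
    by move=> j; under eq_fun do rewrite EFinM; exact: (integrableZl mD _ (iu _)).
  rewrite big1 ?adde0 // => j _.
  under eq_integral do rewrite EFinM.
  rewrite integralZl //; last exact: iu.
  by rewrite [X in (_ * X)%E](_ : _ = 0%E) ?mule0 //; exact: u0.
have [j a'j] : exists j, a' j != 0.
  move: ai; case: (unliftP ord_max i) => [j ->|->]; first by exists j.
  by rewrite -/b bzero eqxx.
pose F x := \sum_j a' j * u j x.
have iF : mu.-integrable D (fun x => (F x)%:E).
  rewrite /F; under eq_fun do rewrite -sumEFin.
  apply: (integrable_sum mD) => l _; under eq_fun do rewrite EFinM.
  exact: (integrableZl mD _ (iu _)).
have F0 : (\int[mu]_(x in D) `|(F x)%:E| = 0)%E.
  transitivity (\int[mu]_(x in D) (F x)%:E)%E.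
    apply: eq_integral => x /set_mem Dx; rewrite abse_EFin ger0_norm //.
    by have := hx x 0 Dx (lexx _); rewrite bzero mul0r addr0.
  rewrite /F; under eq_integral do rewrite -sumEFin.
  rewrite integral_sum //; last first.
    by move=> l; under eq_fun do rewrite EFinM; exact: (integrableZl mD _ (iu _)).
  rewrite big1 // => l _.
  under eq_integral do rewrite EFinM.
  rewrite integralZl //; last exact: iu.
  by rewrite [X in (_ * X)%E](_ : _ = 0%E) ?mule0 //; exact: u0.
have := (ae_eq_integral_abs mu mD (measurable_int _ iF)).1 F0.
move=> [M [mM M0 HM]].
exists a', M; split => //; first by exists j.
move=> x Dx Mx; apply: contrapT => Fx; apply: Mx; apply: HM => /= HH; apply: Fx.
by move: (HH Dx) => -[].
Qed.

Lemma KL k : forall (D : set X) (u : 'I_k -> X -> R) (h : X -> R) (c : R),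
  measurable D -> mu D = 1%E ->
  (forall j, mu.-integrable D (EFin \o u j)) ->
  (forall j, (\int[mu]_(x in D) (u j x)%:E = 0)%E) ->
  measurable_fun D h -> (c%:E < \int[mu]_(x in D) (h x)%:E)%E ->
  exists s, [/\ combo D s, forall j, wsum s (u j) = 0 & c <= wsum s h].
Proof.
elim: k => [|k IH] D u h c mD muD iu u0 mh ch.
  have [//|[a [M [[i _] _ _ _]]]] := KLstep mD muD iu u0 mh ch; by case: i.
have [//|[a [M [[i ai] mM M0 HM]]]] := KLstep mD muD iu u0 mh ch.
pose D' := D `\` M.
have mD' : measurable D' by exact: measurableD.
have muD' : mu D' = 1%E.
  have h0 : mu (D `&` M) = 0%E.
    apply: (subset_measure0 (measurableI _ _ mD mM) mM) => //; exact: subIsetr.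
  rewrite measureD //; last by apply: (le_lt_trans (probability_le1 _ mD)); exact: ltry.
  transitivity (1 - 0 : \bar R)%E; last by rewrite sube0.
  by congr (_ - _)%E; [exact: muD|exact: h0].
pose u' l := u (lift i l).
have [] := IH D' u' h c mD' muD'.
- move=> l; apply: (integrableS mD mD' (@subDsetl _ _ _)); exact: iu.
- move=> l; rewrite -(negligible_integral mM mD (iu _) M0); exact: u0.
- exact: (measurable_funS mD (@subDsetl _ _ _) mh).
- rewrite -(negl_integral mM mD) //; exact/measurable_EFinP.
move=> s [[os w1] ws hs]; exists s; split => //.
  by split => //; apply: (okc_sub _ os); exact: subDsetl.
have wsi : wsum s (u i) = 0.
  have : wsum s (fun x => \sum_l a l * u l x) = 0.
    rewrite (wsum_eqD (g := fun=> 0) os) ?wsum0 // => x [Dx Mx].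
    exact: HM.
  rewrite wsum_lin (bigD1_ord i) //= big1 ?addr0; last by move=> l _; rewrite ws mulr0.
  by move/eqP; rewrite mulf_eq0 (negbTE ai) /= => /eqP.
move=> j; case: (unliftP i j) => [l ->|->] //; exact: ws.
Qed.

End KL.


Section cara.
Context (R : realType) (X : Type).
Implicit Types (s : seq (R * X)) (D : set X).

Lemma ker_exists (m n : nat) (M : 'M[R]_(m, n)) : (n < m)%N ->
  exists2 b : 'rV[R]_m, b != 0 & b *m M = 0.
Proof.
move=> nm; pose K := kermx M.
have rK : (0 < \rank K)%N.
  rewrite mxrank_ker subn_gt0; exact: (leq_ltn_trans (rank_leq_col M) nm).
have K0 : K != 0 by rewrite -mxrank_eq0 -lt0n.
have [i Ki] : exists i, row i K != 0.
  apply: contrapT => H; move/negP: K0; apply; apply/eqP/row_matrixP => i.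
  rewrite row0; apply/eqP/negPn/negP => Hi; apply: H; by exists i.
exists (row i K) => //; apply/eqP; rewrite -sub_kermx; exact: row_sub.
Qed.

Lemma okc_map D (T : Type) (r : seq T) (f : T -> R * X) :
  (forall p, 0 <= (f p).1 /\ D (f p).2) -> okc D (map f r).
Proof. by move=> H; elim: r => //= p r IH; have [? ?] := H p. Qed.

Lemma okc_tnth D s : okc D s -> forall i, 0 <= (tnth (in_tuple s) i).1 /\ D (tnth (in_tuple s) i).2.
Proof.
move=> os i; rewrite (tnth_nth (tnth (in_tuple s) i)) /=.
have : (i < size s)%N := ltn_ord i.
move: (tnth _ _) (nat_of_ord i) => x0 n.
elim: s os n {i} => [|p s IH] //= [p0 [Dp os]] [|n] //= ns.
by apply: IH.
Qed.

Lemma wsum_tnth s f : wsum s f = \sum_(i < size s) (tnth (in_tuple s) i).1 * f (tnth (in_tuple s) i).2.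
Proof. by rewrite /wsum big_tnth. Qed.

Lemma cara_step k (u : 'I_k -> X -> R) (h : X -> R) D s : combo D s -> (k.+1 < size s)%N ->
  exists s', [/\ combo D s', size s' = (size s).-1,
    forall j, wsum s' (u j) = wsum s (u j) & wsum s h <= wsum s' h].
Proof.
move=> [os w1] ks.
set N := size s.
pose x (p : 'I_N) := (tnth (in_tuple s) p).2.
pose al (p : 'I_N) := (tnth (in_tuple s) p).1.
have al0 p : 0 <= al p by have [] := okc_tnth os p.
have Dx p : D (x p) by have [] := okc_tnth os p.
pose M : 'M[R]_(N, k.+1) := \matrix_(p, c) extv (fun j => u j (x p)) 1 c.
have [b b0 bM] := @ker_exists _ _ M ks.
have bc : forall c, \sum_p b 0 p * extv (fun j => u j (x p)) 1 c = 0.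
  move=> c; have := congr1 (fun A : 'M[R]_(1, k.+1) => A 0 c) bM; rewrite !mxE /=.
  by under eq_bigr do rewrite mxE.
have b1 : \sum_p b 0 p = 0.
  by have := bc ord_max; under eq_bigr do rewrite extv_max mulr1.
have bu : forall j, \sum_p b 0 p * u j (x p) = 0.
  by move=> j; have := bc (lift ord_max j); under eq_bigr do rewrite extv_lift.
pose sg := if 0 <= \sum_p b 0 p * h (x p) then 1 else -1 : R.
pose g p := sg * b 0 p.
have g1 : \sum_p g p = 0 by rewrite /g -mulr_sumr b1 mulr0.
have gu j : \sum_p g p * u j (x p) = 0.
  by rewrite /g; under eq_bigr do rewrite -mulrA; rewrite -mulr_sumr bu mulr0.
have gh : 0 <= \sum_p g p * h (x p).
  rewrite /g; under eq_bigr do rewrite -mulrA; rewrite -mulr_sumr /sg.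
  case: ifPn => H; first by rewrite mul1r.
  by rewrite mulN1r oppr_ge0 ltW // ltNge.
have [p0 gp0] : exists p, g p < 0.
  apply/not_existsP => H.
  have gge0 p : 0 <= g p by rewrite leNgt; apply/negP; exact: H.
  move/negP: b0; apply; apply/eqP/rowP => p; rewrite mxE.
  have := @psumr_eq0P _ _ xpredT g (fun p _ => gge0 p) g1 p isT.
  rewrite /g /sg; case: ifPn => _; first by rewrite mul1r.
  by move/eqP; rewrite mulN1r oppr_eq0 => /eqP.
pose q := Order.arg_min p0 (fun p => g p < 0) (fun p => al p / - g p).
have [pm [gpm pmin]] : exists pm, g pm < 0 /\ forall p, g p < 0 -> al pm / - g pm <= al p / - g p.
  case: (@arg_minP _ _ _ p0 (fun p => g p < 0) (fun p => al p / - g p) gp0) => /= pm gpm H; exists pm; split => //.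
pose t := al pm / - g pm.
have t0 : 0 <= t by rewrite divr_ge0 // oppr_ge0 ltW.
pose al' p := al p + t * g p.
have al'0 p : 0 <= al' p.
  rewrite /al'; have [gp|gp] := leP 0 (g p).
    by apply: addr_ge0 => //; exact: mulr_ge0.
  have := pmin p gp; rewrite -/t => tle.
  have ng : 0 < - g p by rewrite oppr_gt0.
  move: tle; rewrite ler_pdivlMr // => H.
  nra.
have al'pm : al' pm = 0.
  rewrite /al' /t; field; rewrite lt_eqF //.
pose s' := [seq (al' p, x p) | p <- enum (predC1 pm)].
have ws' f : wsum s' f = wsum s f + t * \sum_p g p * f (x p).
  have -> : wsum s' f = \sum_p al' p * f (x p).
    rewrite /wsum big_map big_enum /= [RHS](bigD1 pm) //= al'pm mul0r add0r.
    by apply: eq_bigl => p; rewrite inE.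
  rewrite wsum_tnth /al'; under eq_bigr do rewrite mulrDl -mulrA.
  by rewrite big_split -mulr_sumr.
exists s'; split.
- split; first by apply: okc_map => p /=; split.
  by rewrite ws'; under eq_bigr do rewrite mulr1; rewrite g1 mulr0 addr0.
- by rewrite size_map -cardE cardC1 card_ord.
- by move=> j; rewrite ws' gu mulr0 addr0.
- by rewrite ws' lerDl; apply: mulr_ge0.
Qed.

Lemma cara k (u : 'I_k -> X -> R) (h : X -> R) D s : combo D s ->
  exists s', [/\ combo D s', (size s' <= k.+1)%N,
    forall j, wsum s' (u j) = wsum s (u j) & wsum s h <= wsum s' h].
Proof.
move: {2}(size s) (leqnn (size s)) => n; elim: n s => [|n IH] s ss cs.
  by exists s; split => //; apply: (leq_trans ss).
have [le|lt] := leqP (size s) k.+1; first by exists s.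
have [s1 [c1 sz1 u1 h1]] := cara_step u h cs lt.
have [|s2 [c2 sz2 u2 h2]] := IH s1 _ c1; first by rewrite sz1 -subn1 leq_subLR add1n.
exists s2; split => //; first by move=> j; rewrite u2 u1.
exact: le_trans h2.
Qed.

Lemma okc_nth D s x0 n : okc D s -> (n < size s)%N ->
  0 <= (nth x0 s n).1 /\ D (nth x0 s n).2.
Proof. by elim: s n => [|p s IH] //= [|n] [p0 [Dp os]] //= ns; apply: IH. Qed.

Lemma pad n D s (x0 : X) : combo D s -> (size s <= n.+1)%N ->
  exists (m : 'I_n.+1 -> X) (al : 'I_n.+1 -> R),
    (forall i, 0 <= al i) /\ forall f, \sum_i al i * f (m i) = wsum s f.
Proof.
move=> [os w1] sn.
exists (fun i => (nth (0, x0) s i).2), (fun i => (nth (0, x0) s i).1); split.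
  move=> i; have [lt|ge] := ltnP i (size s); first by have [] := okc_nth (0, x0) os lt.
  by rewrite nth_default.
move=> f; rewrite /wsum (big_nth (0, x0)) big_mkord (big_ord_widen _ (fun i => (nth (0, x0) s i).1 * f (nth (0, x0) s i).2) sn) [RHS]big_mkcond /=.
apply: eq_bigr => i _; case: ltnP => // ge.
by rewrite nth_default // mul0r.
Qed.

End cara.


Section dsum.
Context d (T : measurableType d) (R : realType) (N : nat) (x : 'I_N -> T)
  (a : 'I_N -> R) (a0 : forall i, 0 <= a i) (a1 : \sum_i a i = 1).

Definition dsum (B : set T) : \bar R :=
  let _ := a0 in let _ := a1 in (\sum_(i < N) (a i)%:E * \d_(x i) B)%E.

Let mseq (k : nat) : {measure set T -> \bar R} :=
  match insub k with
  | Some i => mscale (NngNum (a0 i)) (\d_(x i) : {measure set T -> \bar R})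
  | None => mzero
  end.

Let dsumE : dsum = msum mseq N.
Proof.
apply/funext => B; rewrite /dsum /msum; apply: eq_bigr => i _.
by rewrite /mseq valK.
Qed.

Let dsum0 : dsum set0 = 0%E.
Proof. by rewrite dsumE measure0. Qed.

Let dsum_ge0 B : (0 <= dsum B)%E.
Proof. by rewrite dsumE measure_ge0. Qed.

Let dsum_sigma_additive : semi_sigma_additive dsum.
Proof. by rewrite dsumE; exact: measure_semi_sigma_additive. Qed.

HB.instance Definition _ := isMeasure.Build _ _ _ dsum
  dsum0 dsum_ge0 dsum_sigma_additive.

Let dsum_setT : dsum setT = 1%E.
Proof.
rewrite /dsum; under eq_bigr do rewrite diracT mule1.
by rewrite sumEFin a1.
Qed.

HB.instance Definition _ := Measure_isProbability.Build _ _ _ dsum dsum_setT.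

Lemma ge0_integral_dsum (f : T -> \bar R) : measurable_fun setT f ->
  (forall y, 0 <= f y)%E ->
  (\int[dsum]_y f y = \sum_i (a i)%:E * f (x i))%E.
Proof.
move=> mf f0.
rewrite (eq_measure_integral (msum mseq N)); last by move=> A mA _; exact: (congr1 (fun F => F A) dsumE).
rewrite ge0_integral_measure_sum //; apply: eq_bigr => i _.
rewrite /mseq valK ge0_integral_mscale //= integral_dirac //.
by rewrite diracT mul1e.
Qed.

Lemma integral_dsum (f : T -> R) : measurable_fun setT f ->
  (\int[dsum]_y (f y)%:E = (\sum_i a i * f (x i))%:E)%E.
Proof.
move=> mf; rewrite integralE.
have mf' : measurable_fun setT (EFin \o f) by exact/measurable_EFinP.
rewrite ge0_integral_dsum //; last exact: measurable_funepos.
rewrite ge0_integral_dsum //; last exact: measurable_funeneg.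
have ep y : ((EFin \o f)^\+ y = (Num.max (f y) 0)%:E)%E by rewrite funeposE EFin_max.
have en y : ((EFin \o f)^\- y = (Num.max (- f y) 0)%:E)%E by rewrite funenegE EFin_max.
under eq_bigr do rewrite ep -EFinM.
under [X in (_ - X)%E]eq_bigr do rewrite en -EFinM.
rewrite !sumEFin -EFinB -sumrB; congr EFin; apply: eq_bigr => i _.
rewrite -mulrBr; congr (_ * _).
have [h|h] := leP 0 (f (x i)).
  by rewrite max_r ?subr0 // oppr_le0.
by rewrite max_l ?sub0r ?opprK // oppr_ge0 ltW.
Qed.


Lemma integrable_dsum (f : T -> R) : measurable_fun setT f ->
  dsum.-integrable setT (EFin \o f).
Proof.
move=> mf; apply/integrableP; split; first exact/measurable_EFinP.
rewrite ge0_integral_dsum //; last first.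
  by apply: measurableT_comp => //; exact/measurable_EFinP.
under eq_bigr do rewrite /comp abse_EFin -EFinM.
by rewrite sumEFin ltry.
Qed.

End dsum.

Unset Implicit Arguments.
Set Strict Implicit.

Lemma le_via_reals (R : realType) (x y : \bar R) :
  (forall c : R, (c%:E < x)%E -> (c%:E <= y)%E) -> (x <= y)%E.
Proof.
case: x => [r| |] H; last exact: leNye.
- case: y H => [s| |] H; last 2 first.
  + exact: leey.
  + by have := H (r - 1); rewrite lte_fin ltrBlDr ltrDl ltr01 => /(_ isT).
  rewrite lee_fin leNgt; apply/negP => sr.
  have := H ((r + s) / 2); rewrite lte_fin lee_fin => /(_ _).
  by move=> K; have := K ltac:(lra); lra.
- rewrite (@eq_infty _ y) //.
  by move=> r; apply: H; exact: ltry.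
Qed.

Theorem theorem3p4 (R : realType) (A Q : ptopologicalType)
  (Phi : A -> R) (Psi : A -> Q) (n : nat)
  (g : 'I_n -> Q -> R) (lo up : 'I_n -> \bar R) :
  @suslin_space R A ->
  measurable_fun [set: borel A] (Phi : borel A -> R) ->
  semibounded Phi ->
  separable_space Q -> @metrizable_space R Q ->
  measurable_fun [set: borel A] (Psi : borel A -> borel Q) ->
  (forall j, measurable_fun [set: borel Q] (g j : borel Q -> R)) ->
  (forall j, lo j != +oo%E /\ up j != -oo%E /\ (lo j <= up j)%E) ->
  Uval Phi (PiI Psi g lo up) = Uval Phi (PiI Psi g lo up `&` @Delta R A n) /\
  Uval Phi (PiI Psi g lo up `&` @Delta R A n) =
  ereal_sup [set r : \bar R | exists (mu : 'I_n.+1 -> A) (alpha : 'I_n.+1 -> R),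
     [/\ forall i, 0 <= alpha i, \sum_(i < n.+1) alpha i = 1,
         forall j : 'I_n,
           in_cinterval (lo j) (up j) (\sum_(i < n.+1) alpha i * g j (Psi (mu i))) &
         r = (\sum_(i < n.+1) alpha i * Phi (mu i))%:E]].
Proof.
move=> _ mPhi _ _ _ mPsi mg _.
have H3 : (Uval Phi (PiI Psi g lo up `&` @Delta R A n) <= Uval Phi (PiI Psi g lo up))%E.
  by apply: ereal_sup_le => _ [pi [hpi _] <-]; exists pi.
set S := (ereal_sup [set r : \bar R | _]).
have H2 : (S <= Uval Phi (PiI Psi g lo up `&` @Delta R A n))%E.
  apply: ge_ereal_sup => _ [mu [alpha [al0 al1 hin ->]]].
  pose pi := @dsum _ (borel A) R n.+1 mu alpha al0 al1.
  apply: ereal_sup_ubound; exists pi; last by rewrite integral_dsum.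
  split.
    exists (@dsum _ (borel Q) R n.+1 (fun i => Psi (mu i)) alpha al0 al1).
      move=> B mB; rewrite /pushforward /= /dsum; apply: eq_bigr => i _.
      by rewrite !diracE.
    move=> j; split; first exact: integrable_dsum.
    by rewrite integral_dsum //; exact: hin.
  by exists mu, alpha; split.
have H1 : (Uval Phi (PiI Psi g lo up) <= S)%E.
  apply: ge_ereal_sup => _ [pi [P hP hQ] <-].
  apply: le_via_reals => c hc.
  pose m j := fine (\int[P]_y (g j y)%:E)%E.
  have intg j : P.-integrable setT (EFin \o g j) := (hQ j).1.
  have mgPsi j : measurable_fun [set: borel A] (fun x : borel A => g j (Psi x)).
    exact: measurableT_comp (mg j) mPsi.
  have hpush (f : borel Q -> \bar R) :
      (\int[pushforward pi (Psi : borel A -> borel Q)]_y f y = \int[P]_y f y)%E.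
    by apply: eq_measure_integral => B mB _; exact/esym/hP.
  have intgPsi j : pi.-integrable setT (EFin \o (fun x => g j (Psi x))).
    apply/integrableP; split; first exact/measurable_EFinP.
    have := (integrableP _ _ _ (intg j)).2.
    rewrite -hpush ge0_integral_pushforward //.
    + by apply: measurableT_comp => //; exact/measurable_EFinP.
  have intP j : (\int[pi]_x (g j (Psi x))%:E = (m j)%:E)%E.
    rewrite /m fineK; last exact: (integrable_fin_num measurableT (intg j)).
    rewrite -hpush (integral_pushforward mPsi) //.
    + exact/measurable_EFinP.
    + exact: intgPsi j.
  pose u j x := g j (Psi x) - m j.
  have icst j : pi.-integrable setT (EFin \o cst (m j)).
    exact: finite_measure_integrable_cst.
  have iu j : pi.-integrable setT (EFin \o u j).
    rewrite (_ : EFin \o u j = (EFin \o (fun x => g j (Psi x))) \- (EFin \o cst (m j)))%E.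
      exact: integrableB.
    by apply/funext => x; rewrite /u /= EFinB.
  have u0 j : (\int[pi]_x (u j x)%:E = 0)%E.
    under eq_integral do rewrite /u EFinB.
    rewrite (integralB_EFin _ (intgPsi j) (icst j)) // intP.
    rewrite (_ : (fun x => (m j)%:E) = cst (m j)%:E) // integral_cst //.
    rewrite [X in (_ - X)%E](_ : _ = (m j)%:E) ?subee //.
    by rewrite -[RHS]mule1; congr (_ * _)%E; exact: probability_setT.
  have [s [cs ws hs]] := KL measurableT (probability_setT pi) iu u0 mPhi hc.
  have [s' [cs' sz' ws' hs']] := cara u Phi cs.
  have [mu [al [al0 hal]]] := @pad _ _ n _ s' (point : A) cs' sz'.
  apply: (@le_trans _ _ ((\sum_i al i * Phi (mu i))%:E)).
    by rewrite lee_fin hal; exact: le_trans hs hs'.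
  have w1 : wsum s' (fun=> 1) = 1 := cs'.2.
  apply: ereal_sup_ubound; exists mu, al; split => //.
    by under eq_bigr do rewrite -[al _]mulr1; rewrite (hal (fun=> 1)).
  move=> j; rewrite /in_cinterval.
  have -> : \sum_i al i * g j (Psi (mu i)) = m j.
    rewrite (hal (fun x => g j (Psi x))) (_ : (fun x => g j (Psi x)) = fun x => u j x + m j * 1).
      by rewrite wsumD wsumZ ws' ws w1 add0r mulr1.
    by apply/funext => x; rewrite /u mulr1 subrK.
  rewrite /m fineK; first exact: (hQ j).2.
  exact: (integrable_fin_num measurableT (intg j)).
split; apply/eqP; rewrite eq_le.
  by rewrite H3 (le_trans H1 H2).
by rewrite H2 (le_trans H3 H1).
Qed.
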